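(* Let $\pi\colon(T,X)\to(T,Y)$ be a nontrivial extension of compact metric flows with $(T,Y)$ minimal. Suppose that $\mathtt R_\pi$ has a dense set of a.p. points and that $\pi$ is weakly mixing. Then there exists a residual set $Y_{\mathrm{LY}}\subseteq Y$ such that for every $y\in Y_{\mathrm{LY}}$, the fiber $\pi^{-1}y$ has no isolated points and contains an uncountable subset $B$ which is dense in $\pi^{-1}y$ and is Li-Yorke scrambled for $\pi$ relative to $\mathtt R_\pi$.
   Context: $\mathtt R_\pi=\{(x_1,x_2):\pi x_1=\pi x_2\}$ with diagonal $T$-action; $\Delta_X$ the diagonal; nontrivial means $\mathtt R_\pi\ne\Delta_X$. A point is a.p. if its return-time sets to neighborhoods are syndetic in $T$. $\pi$ is weakly mixing if $(T,\mathtt R_\pi)$ is topologically transitive (for nonempty open $U,V\subseteq\mathtt R_\pi$ some $t$ has $V\cap tU\ne\emptyset$). For closed $L$ with $\Delta_X\subsetneq L\subseteq\mathtt R_\pi$, $(x,x')$ is a Li-Yorke pair for $\pi$ rel. $L$ if $(x,x')\in\mathtt R_\pi$ and $L\subseteq\overline{T(x,x')}$; a set $S\subseteq X$ is Li-Yorke scrambled for $\pi$ rel. $L$ if every $(x,x')\in S\times S$ with $x\ne x'$ is a Li-Yorke pair for $\pi$ rel. $L$. *)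

(* Defs.v *)
From HB Require Import structures.
From mathcomp Require Import all_boot all_order all_algebra.
From mathcomp Require Import all_classical all_reals all_analysis.
Set Implicit Arguments. Unset Strict Implicit. Unset Printing Implicit Defensive.
Import Order.TTheory GRing.Theory Num.Theory.
Local Open Scope classical_set_scope.

Definition topological_group (T : topologicalType)
    (mul : T -> T -> T) (inv : T -> T) (e : T) : Prop :=
  [/\ (forall a b c, mul a (mul b c) = mul (mul a b) c),
      (forall a, mul e a = a /\ mul a e = a),
      (forall a, mul (inv a) a = e /\ mul a (inv a) = e),
      continuous (fun p : T * T => mul p.1 p.2) &
      continuous inv].

Definition is_action (T : topologicalType) (mul : T -> T -> T) (e : T)
    (X : topologicalType) (act : T -> X -> X) : Prop :=
  [/\ (forall x, act e x = x),
      (forall s t x, act (mul s t) x = act s (act t x)) &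
      continuous (fun p : T * X => act p.1 p.2)].

Definition syndetic (T : topologicalType) (mul : T -> T -> T) (A : set T) : Prop :=
  exists K : set T, compact K /\
    forall t, exists k a, K k /\ A a /\ t = mul k a.

Definition minimal_flow (T X : topologicalType) (act : T -> X -> X) : Prop :=
  forall M : set X, M !=set0 -> closed M ->
    (forall t x, M x -> M (act t x)) -> M = setT.

Definition Rpi (X Y : Type) (pi : X -> Y) : set (X * X) :=
  [set p | pi p.1 = pi p.2].

Definition diagX (X : Type) : set (X * X) := [set p | p.1 = p.2].

Definition act2 (T X : Type) (act : T -> X -> X) (t : T) (p : X * X) : X * X :=
  (act t p.1, act t p.2).

(* Neighborhoods of p in S are O ∩ S with O a
   neighborhood of p in X × X; as S is invariant, t p ∈ O ∩ S iff t p ∈ O. *)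
Definition ap_point (T X : topologicalType) (mul : T -> T -> T)
    (act : T -> X -> X) (S : set (X * X)) (p : X * X) : Prop :=
  S p /\ forall O : set (X * X), nbhs p O ->
    syndetic mul [set t | (O `&` S) (act2 act t p)].

Definition dense_ap (T X : topologicalType) (mul : T -> T -> T)
    (act : T -> X -> X) (S : set (X * X)) : Prop :=
  forall O : set (X * X), open O -> O `&` S !=set0 ->
    O `&` ap_point mul act S !=set0.

Definition top_transitive (T X : topologicalType) (act : T -> X -> X)
    (S : set (X * X)) : Prop :=
  forall O1 O2 : set (X * X), open O1 -> open O2 ->
    O1 `&` S !=set0 -> O2 `&` S !=set0 ->
    exists t, (O2 `&` S) `&` (act2 act t @` (O1 `&` S)) !=set0.

Definition weakly_mixing (T X Y : topologicalType) (actX : T -> X -> X)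
    (pi : X -> Y) : Prop := top_transitive actX (Rpi pi).

Definition orbit_closure2 (T X : topologicalType) (act : T -> X -> X)
    (p : X * X) : set (X * X) :=
  closure (range (fun t => act2 act t p)).

Definition LY_pair (T X Y : topologicalType) (act : T -> X -> X) (pi : X -> Y)
    (L : set (X * X)) (x x' : X) : Prop :=
  Rpi pi (x, x') /\ L `<=` orbit_closure2 act (x, x').

Definition LY_scrambled (T X Y : topologicalType) (act : T -> X -> X)
    (pi : X -> Y) (L : set (X * X)) (S : set X) : Prop :=
  forall x x', S x -> S x' -> x <> x' -> LY_pair act pi L x x'.

Definition residual (Y : topologicalType) (A : set Y) : Prop :=
  exists F : nat -> set Y, (forall n, open (F n) /\ dense (F n)) /\
    \bigcap_n F n `<=` A.

(* Main.v *)
Require Import Defs.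
From HB Require Import structures.
From mathcomp Require Import all_boot all_order all_algebra.
From mathcomp Require Import all_classical all_reals all_analysis.
From mathcomp Require Import zify.
From Stdlib Require Import Lia.
Local Open Scope classical_set_scope.

Module Helpers.
Set Implicit Arguments. Unset Strict Implicit. Unset Printing Implicit Defensive.
Import Order.TTheory GRing.Theory Num.Theory.

Section MetricBasics.
Local Open Scope ring_scope.
Context {R : realType} {X : metricType R}.
Implicit Types (x y z : X) (r e : R).

Lemma ballD x r y : ball x r y <-> mdist x y < r.
Proof. by rewrite ballEmdist. Qed.

Lemma ball_sub x r y : ball x r y -> exists2 e, 0 < e & ball y e `<=` ball x r.
Proof.
move=> /ballD xy; exists (r - mdist x y); first by rewrite subr_gt0.
move=> z /ballD yz; apply/ballD.
apply: (le_lt_trans (metric_triangle x y z)); by rewrite -ltrBrDl.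
Qed.

Lemma nbhs_ball_pos x r : 0 < r -> nbhs x (ball x r).
Proof. by move=> r0; apply/nbhs_ballP; exists r. Qed.

Lemma ball_open' x r : open (ball x r).
Proof.
rewrite openE => y /ball_sub [e e0 sub]; rewrite /interior.
exact: (filterS sub (nbhs_ball_pos y e0)).
Qed.

Lemma ex_ball x N : nbhs x N -> exists2 e, 0 < e & ball x e `<=` N.
Proof. by move=> /nbhs_ballP [e e0 sub]; exists e. Qed.

Lemma ballxx' x r : 0 < r -> ball x r x.
Proof. by move=> r0; apply/ballD; rewrite mdistxx. Qed.

Lemma closure_half x r : 0 < r -> closure (ball x (r / 2)) `<=` ball x r.
Proof.
move=> r0 y cly; apply/ballD; rewrite ltNge; apply/negP => ry.
have e0 : 0 < mdist x y - r / 2.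
  by rewrite subr_gt0 (lt_le_trans _ ry) // ltr_pdivrMr // ltr_pMr // ltr1n.
have [z [/ballD xz /ballD yz]] := cly _ (nbhs_ball_pos y e0).
have := metric_triangle x z y; rewrite (metric_sym z y).
move=> h; have : mdist x y < mdist x y by
  apply: (le_lt_trans h); rewrite -(subrK (r/2) (mdist x y)) addrC ltrD.
by rewrite ltxx.
Qed.

Lemma ball_disj x y e : 0 < e -> e *+ 2 <= mdist x y ->
  ball x e `&` ball y e = set0.
Proof.
move=> e0 exy; apply/seteqP; split=> // z [/ballD xz /ballD yz].
have := metric_triangle x z y; rewrite (metric_sym z y) => h.
have : mdist x y < e *+ 2 by apply: (le_lt_trans h); rewrite mulr2n ltrD.
by rewrite ltNge exy.
Qed.

End MetricBasics.

Section Boxes.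
Local Open Scope ring_scope.
Context {R : realType} {X : metricType R}.
Variable F : set X.

Definition boxd (D : set (X * X)) := forall U V : set X, open U -> open V ->
  U `&` F !=set0 -> V `&` F !=set0 ->
  exists x x', [/\ U x, F x, V x', F x' & D (x, x')].

Definition sw (D : set (X * X)) : set (X * X) := [set p | D (p.2, p.1)].

Lemma open_box (D : set (X * X)) x x' : open D -> D (x, x') ->
  exists2 e, 0 < e & forall a b, ball x e a -> ball x' e b -> D (a, b).
Proof.
rewrite openE => oD /oD; rewrite /interior => /nbhs_ballP [e e0 sub].
by exists e => // a b xa xb; apply: (sub (a, b)); split.
Qed.

Lemma sw_open D : open D -> open (sw D).
Proof.
move=> oD; have -> : sw D = (fun p : X * X => (p.2, p.1)) @^-1` D by [].
by apply: open_comp => // p _; exact: swap_continuous.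
Qed.

Lemma boxd_sw D : boxd D -> boxd (sw D).
Proof.
move=> bD U V oU oV UF VF; have [x [x' [Vx Fx Ux Fx' Dxx]]] := bD V U oV oU VF UF.
by exists x', x.
Qed.

Lemma boxdI A B : open A -> boxd A -> boxd B -> boxd (A `&` B).
Proof.
move=> oA bA bB U V oU oV UF VF.
have [x [x' [Ux Fx Vx' Fx' Axx]]] := bA U V oU oV UF VF.
have [e e0 box] := open_box oA Axx.
have o1 : open (U `&` ball x e) by apply: openI => //; exact: ball_open'.
have o2 : open (V `&` ball x' e) by apply: openI => //; exact: ball_open'.
have n1 : (U `&` ball x e) `&` F !=set0.
  by exists x; split => //; split => //; exact: ballxx'.
have n2 : (V `&` ball x' e) `&` F !=set0.
  by exists x'; split => //; split => //; exact: ballxx'.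
have [a [b [[Ua xa] Fa [Vb x'b] Fb Bab]]] := bB _ _ o1 o2 n1 n2.
by exists a, b; split => //; split => //; exact: box.
Qed.

Definition gb (b : X * R) := F b.1 /\ 0 < b.2.
Definition bs (b : X * R) := ball b.1 b.2.
Definition prD (D : set (X * X)) (b1 b2 : X * R) :=
  bs b1 `&` bs b2 = set0 /\ (forall a a', bs b1 a -> bs b2 a' -> D (a, a')).

Lemma prD_sub D b1 b2 c1 c2 : prD D b1 b2 -> bs c1 `<=` bs b1 ->
  bs c2 `<=` bs b2 -> prD D c1 c2.
Proof.
move=> [d1 d2] s1 s2; split; last by move=> a a' /s1 h1 /s2 h2; exact: d2.
apply/seteqP; split => // z [/s1 z1 /s2 z2].
by have : (bs b1 `&` bs b2) z by []; rewrite d1.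
Qed.

Lemma prD_sym D b1 b2 : (forall p, D p -> D (p.2, p.1)) -> prD D b1 b2 -> prD D b2 b1.
Proof.
move=> Ds [d1 d2]; split; first by rewrite setIC.
by move=> a a' h1 h2; exact: (Ds (a', a) (d2 _ _ h2 h1)).
Qed.

Hypothesis Hperf : forall x, F x -> forall N, nbhs x N ->
  exists2 x', F x' & N x' /\ x' <> x.

Lemma pair_shrink D b1 b2 : open D -> boxd D -> gb b1 -> gb b2 ->
  exists b1' b2', [/\ gb b1', gb b2', bs b1' `<=` bs b1, bs b2' `<=` bs b2
                   & prD D b1' b2'].
Proof.
move=> oD bD [F1 r1] [F2 r2].
have o1 : open (bs b1) by exact: ball_open'.
have o2 : open (bs b2) by exact: ball_open'.
have n1 : bs b1 `&` F !=set0 by exists b1.1; split => //; exact: ballxx'.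
have n2 : bs b2 `&` F !=set0 by exists b2.1; split => //; exact: ballxx'.
have [x [x' [U1 Fx U2 Fx' Dxx]]] := bD _ _ o1 o2 n1 n2.
have [e e0 box] := open_box oD Dxx.
have [e1 e10 s1] := ball_sub U1.
have [e2 e20 s2] := ball_sub U2.
pose e' := Num.min e (Num.min e1 e2).
have e'0 : 0 < e' by rewrite !lt_min e0 e10 e20.
have e'e : e' <= e by rewrite ge_min lexx.
have e'e1 : e' <= e1 by rewrite !ge_min lexx orbT.
have e'e2 : e' <= e2 by rewrite !ge_min lexx !orbT.
clearbody e'.
have [y [Fy y'x' yx]] : exists y, [/\ F y, ball x' e' y & y <> x].
  case: (pselect (x = x')) => [xx'|xx'].
    have [y Fy [xy yx]] := Hperf Fx (nbhs_ball_pos x e'0).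
    by exists y; split => //; rewrite -xx'.
  by exists x'; split => //; [exact: ballxx'|move=> h; apply: xx'].
have [e3 e30 s3] := ball_sub y'x'.
have dxy : 0 < mdist x y by rewrite mdist_gt0; apply/eqP => h; apply: yx.
pose d := Num.min e' (Num.min e3 (mdist x y / 2)).
have d0 : 0 < d by rewrite !lt_min e'0 e30 divr_gt0.
have de' : d <= e' by rewrite ge_min lexx.
have de3 : d <= e3 by rewrite !ge_min lexx orbT.
have ddxy : d <= mdist x y / 2 by rewrite !ge_min lexx !orbT.
exists (x, d), (y, d); split.
- by split.
- by split.
- by move=> z /(le_ball de') /(le_ball e'e1) /s1.
- move=> z /(le_ball de3) /s3 /(le_ball e'e2) /s2 //.
- split.
    apply: ball_disj => //; rewrite mulr2n.
    by rewrite [X in _ <= X](splitr (mdist x y)) lerD.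
  move=> a a' xa ya'; apply: box.
    by apply: (le_ball (le_trans de' e'e)).
  by apply: (le_ball e'e); apply: s3; apply: (le_ball de3).
Qed.

End Boxes.

Section Shrink.
Context {R : realType} {X : metricType R}.
Variable F : set X.
Hypothesis Hperf : forall x, F x -> forall N, nbhs x N ->
  exists2 x', F x' & N x' /\ x' <> x.
Variable D : set (X * X).
Hypotheses (oD : open D) (bD : boxd F D) (sD : forall p, D p -> D (p.2, p.1)).
Variable K : eqType.

Lemma onevs (ks : seq K) (b : K -> X * R) a :
  (forall k, k \in ks -> gb F (b k)) ->
  (forall k k', k \in ks -> k' \in ks -> k != k' -> prD D (b k) (b k')) ->
  gb F a ->
  exists b2 a2, [/\ forall k, k \in ks -> gb F (b2 k) /\ bs (b2 k) `<=` bs (b k),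
    forall k k', k \in ks -> k' \in ks -> k != k' -> prD D (b2 k) (b2 k'),
    gb F a2, bs a2 `<=` bs a & forall k, k \in ks -> prD D (b2 k) a2].
Proof.
elim: ks a => [|k0 ks IH] a gbk prk ga.
  by exists b, a; split => // k; rewrite in_nil.
have [b1' [a' [gb1' ga' s1 sa pr1]]] :=
  pair_shrink Hperf oD bD (gbk k0 (mem_head _ _)) ga.
have [|||b2 [a2 [g2 p2 ga2 sa2 pa2]]] := IH a'.
- by move=> k kk; apply: gbk; rewrite in_cons kk orbT.
- move=> k k' kk kk' nkk; apply: prk => //; rewrite in_cons.
    by rewrite kk orbT.
  by rewrite kk' orbT.
- by [].
exists (fun z => if z == k0 then b1' else b2 z), a2; split.
- move=> k; have [->|nk] := eqVneq k k0; first by [].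
  by rewrite in_cons (negbTE nk) /=; exact: g2.
- move=> k k'; have [->|nk] := eqVneq k k0; have [->|nk'] := eqVneq k' k0.
  + by move=> _ _; rewrite ?eqxx.
  + move=> _; rewrite in_cons (negbTE nk') /= => kk' _.
    have h : prD D (b k0) (b k').
      apply: prk; first exact: mem_head.
        by rewrite in_cons kk' orbT.
      by rewrite eq_sym.
    by apply: (prD_sub h s1); case: (g2 _ kk').
  + rewrite in_cons (negbTE nk) /= => kk _ _.
    have h : prD D (b k) (b k0).
      apply: prk => //; first by rewrite in_cons kk orbT.
      exact: mem_head.
    by apply: (prD_sub h _ s1); case: (g2 _ kk).
  + rewrite !in_cons (negbTE nk) (negbTE nk') /=.
    exact: p2.
- by [].
- by move=> z /sa2 /sa.
- move=> k; have [->|nk] := eqVneq k k0.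
    by move=> _; apply: (prD_sub pr1).
  by rewrite in_cons (negbTE nk) /=; exact: pa2.
Qed.
Lemma shrink_list (ks : seq K) (b : K -> X * R) :
  (forall k, k \in ks -> gb F (b k)) ->
  exists b', (forall k, k \in ks -> gb F (b' k) /\ bs (b' k) `<=` bs (b k)) /\
    (forall k k', k \in ks -> k' \in ks -> k != k' -> prD D (b' k) (b' k')).
Proof.
elim: ks => [|k0 ks IH] gbk.
  by exists b; split => k; rewrite in_nil.
have [|b1 [g1 p1]] := IH.
  by move=> k kk; apply: gbk; rewrite in_cons kk orbT.
have [|||b2 [a2 [g2 p2 ga2 sa2 pa2]]] := @onevs ks b1 (b k0).
- by move=> k kk; case: (g1 _ kk).
- exact: p1.
- exact: gbk (mem_head _ _).
exists (fun z => if z == k0 then a2 else b2 z); split.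
- move=> k; have [->|nk] := eqVneq k k0; first by [].
  rewrite in_cons (negbTE nk) /= => kk.
  have [? s2] := g2 _ kk; have [_ s1] := g1 _ kk.
  by split => // z /s2 /s1.
- move=> k k'; have [->|nk] := eqVneq k k0; have [->|nk'] := eqVneq k' k0.
  + by move=> _ _; rewrite ?eqxx.
  + move=> _; rewrite in_cons (negbTE nk') /= => kk' _.
    by apply: prD_sym => //; exact: pa2.
  + rewrite in_cons (negbTE nk) /= => kk _ _; exact: pa2.
  + rewrite !in_cons (negbTE nk) (negbTE nk') /=; exact: p2.
Qed.

End Shrink.

Fixpoint blists (k : nat) : seq (seq bool) :=
  if k is k'.+1 then [seq b :: s | b <- [:: true; false], s <- blists k']
  else [:: [::]].

Lemma blistsP s : s \in blists (size s).
Proof.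
elim: s => [|b s IH]; first by [].
change (b :: s \in [seq b0 :: s0 | b0 <- [:: true; false], s0 <- blists (size s)]).
by apply: (allpairs_f (fun b s => b :: s)) => //; case: b; rewrite !inE.
Qed.

Definition valid (n : nat) (p : nat * seq bool) := (p.1 <= n)%N /\ size p.2 = (n - p.1)%N.

Definition vnodes (n : nat) : seq (nat * seq bool) :=
  [seq (m, s) | m <- iota 0 n.+1, s <- blists (n - m)].

Lemma vnodesP n p : valid n p -> p \in vnodes n.
Proof.
case: p => m s [/= mn sz].
apply/allpairsPdep; exists m, s; split => //.
  by rewrite mem_iota /= add0n ltnS.
by rewrite -sz blistsP.
Qed.

Section Wcum.
Context {R : realType} {X : metricType R}.
Variable F : set X.
Variable W : nat -> set (X * X).
Hypotheses (HWo : forall k, open (W k)) (HWd : forall k, boxd F (W k)).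

Fixpoint Wc n : set (X * X) := match n with
  | 0 => W 0 `&` sw (W 0)
  | n'.+1 => Wc n' `&` (W n'.+1 `&` sw (W n'.+1)) end.

Lemma Wc_open n : open (Wc n).
Proof.
by elim: n => [|n IH] /=; apply: openI => //; try apply: openI => //;
  apply: sw_open.
Qed.

Lemma WsW_boxd k : boxd F (W k `&` sw (W k)).
Proof. by apply: boxdI => //; apply: boxd_sw. Qed.

Lemma Wc_boxd n : boxd F (Wc n).
Proof.
elim: n => [|n IH] /=; first exact: WsW_boxd.
by apply: boxdI => //; [exact: Wc_open|exact: WsW_boxd].
Qed.

Lemma Wc_sym n p : Wc n p -> Wc n (p.2, p.1).
Proof.
case: p => a b; elim: n => [|n IH] /=; first by move=> [].
by move=> [/IH ? [? ?]].
Qed.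

Lemma Wc_sub k n : (k <= n)%N -> Wc n `<=` W k.
Proof.
elim: n => [|n IH]; first by rewrite leqn0 => /eqP -> p [].
rewrite leq_eqVlt => /orP [/eqP -> p [_ []]//|]; rewrite ltnS => kn p [/IH h _].
exact: h.
Qed.

Lemma Wc_mono m n : (m <= n)%N -> Wc n `<=` Wc m.
Proof.
elim: n => [|n IH]; first by rewrite leqn0 => /eqP ->.
rewrite leq_eqVlt => /orP [/eqP -> //|]; rewrite ltnS => kn p [/IH h _].
exact: h.
Qed.

End Wcum.

Lemma blists_size k s : s \in blists k -> size s = k.
Proof.
elim: k s => [|k IH] s; first by rewrite inE => /eqP ->.
move=> h; have [b [s' [_ hs ->]]] := allpairsPdep h.
by rewrite /= (IH _ hs).
Qed.

Lemma vnodes_valid n p : p \in vnodes n -> valid n p.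
Proof.
move=> /allpairsPdep [m [s [hm hs ->]]]; split => /=.
  by move: hm; rewrite mem_iota add0n ltnS.
exact: blists_size.
Qed.

Section Stages.
Local Open Scope ring_scope.
Context {R : realType} {X : metricType R}.
Variable F : set X.
Variable W : nat -> set (X * X).
Variable Bs : nat -> set X.
Hypotheses (HF0 : F !=set0)
  (Hperf : forall x, F x -> forall N, nbhs x N -> exists2 x', F x' & N x' /\ x' <> x)
  (HWo : forall k, open (W k)) (HWd : forall k, boxd F (W k))
  (HBo : forall n, open (Bs n)).

Definition tg n : set X := if pselect (Bs n `&` F !=set0) then Bs n else setT.

Lemma root_ex n : exists b, gb F b /\ bs b `<=` tg n.
Proof.
have [[z [tz Fz]] otg] : tg n `&` F !=set0 /\ open (tg n).
  rewrite /tg; case: pselect => h; first by split; [exact: h|exact: HBo].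
  split; last exact: openT.
  by case: HF0 => z Fz; exists z.
have /ex_ball [e e0 sub] : nbhs z (tg n) by rewrite nbhsE; exists (tg n).
by exists (z, e).
Qed.

Definition Inv n (S : nat * seq bool -> X * R) :=
  (forall p, valid n p -> gb F (S p)) /\
  (forall p q, valid n p -> valid n q -> p != q -> prD (Wc W n) (S p) (S q)).

Definition Trans n (S S' : nat * seq bool -> X * R) :=
  (forall m s bb, valid n (m, s) ->
     bs (S' (m, bb :: s)) `<=` ball (S (m, s)).1 ((S (m, s)).2 / 2)) /\
  bs (S' (n.+1, [::])) `<=` tg n.

Lemma step n S : Inv n S -> exists S', Inv n.+1 S' /\ Trans n S S'.
Proof.
move=> [gS pS].
have [b0 [gb0 sb0]] := root_ex n.
pose P (p : nat * seq bool) : X * R := if p.1 == n.+1 then b0 else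
  ((S (p.1, behead p.2)).1, (S (p.1, behead p.2)).2 / 2).
have gP : forall p, p \in vnodes n.+1 -> gb F (P p).
  move=> [m s] /vnodes_valid [/= mn sz]; rewrite /P /=.
  have [//|nm] := eqVneq m n.+1.
  have mn' : (m <= n)%N by rewrite leq_eqVlt (negbTE nm) /= in mn.
  have vp : valid n (m, behead s) by split => //=; rewrite size_behead sz subSn.
  have [F1 r1] := gS _ vp; split => //=; exact: divr_gt0.
have [b' [g' p']] := shrink_list Hperf (Wc_open HWo (n:=n.+1)) (@Wc_boxd _ _ F W HWo HWd n.+1)
  (fun p h => Wc_sym h) gP.
exists b'; split; [split|split].
- by move=> p /vnodesP /g' [].
- by move=> p q /vnodesP vp /vnodesP vq; exact: p'.
- move=> m s bb [/= mn sz].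
  have vc : valid n.+1 (m, bb :: s) by split => /=; [exact: leqW|rewrite sz subSn].
  have [_ sub] := g' _ (vnodesP vc).
  move: sub; rewrite /P /=.
  by have -> : (m == n.+1) = false by apply/negbTE; rewrite neq_ltn ltnS mn.
- have vr : valid n.+1 (n.+1, [::]) by split => //=; rewrite subnn.
  have [_ sub] := g' _ (vnodesP vr).
  by move: sub; rewrite /P /= eqxx => sub z /sub /sb0.
Qed.

End Stages.

Lemma no_inj_cantor (g : (nat -> bool) -> nat) : ~ injective g.
Proof.
move=> ig.
pose d (n : nat) : bool := match pselect (exists a, g a = n) with
  | left P => ~~ (sval (cid P)) n | right _ => true end.
have : d (g d) = ~~ d (g d).
  rewrite {1}/d; case: pselect => [P|nP]; last by exfalso; apply: nP; exists d.
  by have := svalP (cid P) => /ig ->.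
by case: (d (g d)).
Qed.

Fixpoint pre (a : nat -> bool) (d : nat) : seq bool :=
  if d is d'.+1 then a d' :: pre a d' else [::].

Lemma size_pre a d : size (pre a d) = d.
Proof. by elim: d => //= d ->. Qed.

Lemma pre_eq a a' d : pre a d = pre a' d -> forall i, (i < d)%N -> a i = a' i.
Proof.
elim: d => // d IH /= [ad /IH h] i; rewrite ltnS leq_eqVlt => /orP [/eqP ->//|].
exact: h.
Qed.

Section Myc.
Context {R : realType} {X : metricType R}.
Variable F : set X.
Variable W : nat -> set (X * X).
Variable Bs : nat -> set X.
Hypotheses (HFc : compact F) (HF0 : F !=set0)
  (Hperf : forall x, F x -> forall N, nbhs x N -> exists2 x', F x' & N x' /\ x' <> x)
  (HWo : forall k, open (W k)) (HWd : forall k, boxd F (W k))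
  (HBo : forall n, open (Bs n))
  (HBb : forall x N, nbhs x N -> exists n, Bs n x /\ Bs n `<=` N).

Let c0 : X := sval (cid HF0).
Let S0 : nat * seq bool -> X * R := fun _ => (c0, 1%R).

Let inv0 : Inv F W 0 S0.
Proof.
split.
  by move=> p _; split => //; exact: (svalP (cid HF0)).
move=> [m s] [m' s'] [/= m0 s0] [/= m'0 s'0].
move: m0 m'0; rewrite !leqn0 => /eqP em /eqP em'; subst m m'.
by move: s0 s'0; rewrite subnn => /size0nil -> /size0nil ->; rewrite eqxx.
Qed.

Let stepf n (S : {S | Inv F W n S}) :
  {S' | Inv F W n.+1 S' /\ Trans F Bs n (sval S) S'} :=
  cid (step HF0 Hperf HWo HWd HBo (svalP S)).

Fixpoint stg n : {S | Inv F W n S} := match n with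
  | 0 => exist _ S0 inv0
  | n'.+1 => exist _ (sval (stepf (stg n'))) (proj1 (svalP (stepf (stg n'))))
  end.

Let Sn n := sval (stg n).
Let SnInv n : Inv F W n (Sn n). Proof. exact: svalP (stg n). Qed.
Let SnTrans n : Trans F Bs n (Sn n) (Sn n.+1).
Proof. exact: (proj2 (svalP (stepf (stg n)))). Qed.

Let nd m a N := (m, pre a (N - m)).
Let valid_nd m a N : (m <= N)%N -> valid N (nd m a N).
Proof. by move=> mN; split => //=; rewrite size_pre. Qed.

Let Bl m a N := bs (Sn N (nd m a N)).

Let Bl_succ m a N : (m <= N)%N -> closure (Bl m a N.+1) `<=` Bl m a N.
Proof.
move=> mN; rewrite /Bl /nd subSn //=.
have [F1 r1] := (SnInv N).1 _ (valid_nd a mN).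
have sub := (SnTrans N).1 _ _ (a (N - m)%N) (valid_nd a mN).
move=> z /(closureS sub) hz; exact: (closure_half r1 hz).
Qed.

Let Bl_mono m a N k : (m <= N)%N -> Bl m a (N + k) `<=` Bl m a N.
Proof.
move=> mN; elim: k => [|k IH]; first by rewrite addn0.
rewrite addnS; move=> z /(@subset_closure _ (Bl m a (N + k).+1)) h.
by apply: IH; apply: Bl_succ h; exact: leq_trans mN (leq_addr _ _).
Qed.

Let center_in m a N : (m <= N)%N -> Bl m a N (Sn N (nd m a N)).1.
Proof.
move=> mN; have [_ r1] := (SnInv N).1 _ (valid_nd a mN); exact: ballxx'.
Qed.

Let pt_ex m a : exists x, F x /\ forall N, (m <= N)%N -> Bl m a N x.
Proof.
pose c k := (Sn (k + m) (nd m a (k + m))).1.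
have Fin : (c @ \oo) F.
  exists 0%N => // k _; rewrite /c.
  by have [F1 _] := (SnInv (k + m)).1 _ (valid_nd a (leq_addl k m)).
have [x [Fx clx]] := HFc _ Fin.
have clB N : (m <= N)%N -> closure (Bl m a N) x.
  move=> mN B nB; apply: clx nB.
  exists (N - m)%N => // k /= hk; rewrite /c.
  have kmN : (N <= k + m)%N by rewrite addnC -leq_subLR.
  have := @Bl_mono m a N (k + m - N) mN; rewrite subnKC //; apply.
  exact: center_in (leq_addl k m).
exists x; split => // N mN; apply: Bl_succ => //; apply: clB.
exact: leqW.
Qed.

Let xpt m a := sval (cid (pt_ex m a)).
Let xptF m a : F (xpt m a). Proof. exact: (svalP (cid (pt_ex m a))).1. Qed.
Let xptB m a N : (m <= N)%N -> Bl m a N (xpt m a).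
Proof. exact: (svalP (cid (pt_ex m a))).2. Qed.

Let sep m a m' a' N : (m <= N)%N -> (m' <= N)%N -> nd m a N != nd m' a' N ->
  xpt m a <> xpt m' a' /\ Wc W N (xpt m a, xpt m' a').
Proof.
move=> mN m'N hne.
have [d1 d2] := (SnInv N).2 _ _ (valid_nd a mN) (valid_nd a' m'N) hne.
have h1 := xptB a mN; have h2 := xptB a' m'N.
split; last exact: d2.
move=> e; rewrite -e in h2.
have : (bs (Sn N (nd m a N)) `&` bs (Sn N (nd m' a' N))) (xpt m a) by [].
by rewrite d1.
Qed.

Let nd_diff m a m' a' : m <> m' \/ (exists i, a i <> a' i) ->
  exists N0, forall N, (N0 <= N)%N ->
    [/\ (m <= N)%N, (m' <= N)%N & nd m a N != nd m' a' N].
Proof.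
case=> [mm'|[i ai]].
  exists (m + m')%N => N h; split.
  - exact: leq_trans (leq_addr _ _) h.
  - exact: leq_trans (leq_addl _ _) h.
  - by apply/eqP => -[e _].
exists (m + m' + i.+1)%N => N h; split.
- by apply: leq_trans h; rewrite -addnA leq_addr.
- by apply: leq_trans h; rewrite (addnC m) -addnA leq_addr.
- apply/eqP => -[e]; subst m' => /pre_eq /(_ i) h'; apply: ai; apply: h'.
  rewrite ltn_subRL; move: h; lia.
Qed.

Let Bm := [set x | exists m a, x = xpt m a].

Let sepW x x' : Bm x -> Bm x' -> x <> x' -> forall k, W k (x, x').
Proof.
move=> [m [a ->]] [m' [a' ->]] xx' k.
have hd : m <> m' \/ (exists i, a i <> a' i).
  apply: contrapT => /not_orP [/contrapT mm' /forallNP hi]; subst m'.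
  apply: xx'; suff -> : a = a' by [].
  by apply: funext => i; apply: contrapT; apply: hi.
have [N0 hN] := nd_diff hd.
have [h1 h2 h3] := hN (maxn N0 k) (leq_maxl _ _).
have [_ hw] := sep h1 h2 h3.
exact: (Wc_sub (leq_maxr N0 k)) hw.
Qed.

Theorem mycielski : exists B : set X, [/\ B `<=` F, ~ countable B,
  F `<=` closure B & forall x x', B x -> B x' -> x <> x' -> forall k, W k (x, x')].
Proof.
exists Bm; split.
- by move=> _ [m [a ->]].
- move=> /countable_injP [f finj].
  apply: (@no_inj_cantor (fun a => f (xpt 0 a))) => a a' /finj e.
  have {}e := e (mem_set (ex_intro _ 0%N (ex_intro _ a erefl) : Bm (xpt 0 a)))
                (mem_set (ex_intro _ 0%N (ex_intro _ a' erefl) : Bm (xpt 0 a'))).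
  apply: funext => i; apply: contrapT => ai.
  have [N0 hN] := nd_diff (m:=0) (m':=0) (or_intror (ex_intro _ i ai)).
  have [h1 h2 h3] := hN N0 (leqnn _).
  by have [] := sep h1 h2 h3.
- move=> z Fz B nB; have [n [Bnz sub]] := HBb nB.
  pose a0 := fun _ : nat => true.
  exists (xpt n.+1 a0); split; first by exists n.+1, a0.
  apply: sub; have := xptB a0 (leqnn n.+1).
  rewrite /Bl /nd subnn /=; move=> /((SnTrans n).2); rewrite /tg.
  case: pselect => // nF; exfalso; apply: nF; by exists z.
- exact: sepW.
Qed.

End Myc.

Section Basis.
Local Open Scope ring_scope.
Context {R : realType} {X : metricType R}.
Hypothesis cX : compact [set: X].

Lemma finite_net e : 0 < e -> exists S : seq X, forall y, exists2 s, s \in S & ball s e y.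
Proof.
move=> e0; apply: contrapT => /forallNP nS.
pose f (S : seq X) : set X := [set y | forall s, s \in S -> ~ ball s e y].
have ff : Filter (filter_from setT f).
  apply: filter_from_filter; first by exists [::].
  move=> S S' _ _; exists (S ++ S') => // y fy; split => s sS.
    by apply: fy; rewrite mem_cat sS.
  by apply: fy; rewrite mem_cat sS orbT.
have pf : ProperFilter (filter_from setT f).
  apply: filter_from_proper => S _.
  have /existsNP [y hy] := nS S; exists y => s sS bs.
  by apply: hy; exists s.
have [x [_ clx]] := cX pf filterT.
have [z [fz bz]] := clx (f [:: x]) (ball x e) (ex_intro2 _ _ [:: x] I (@subset_refl _ _))
  (nbhs_ball_pos x e0).
by apply: (fz x (mem_head _ _)).
Qed.

Lemma ex_basis : exists Bs : nat -> set X, (forall n, open (Bs n)) /\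
  (forall x N, nbhs x N -> exists n, Bs n x /\ Bs n `<=` N).
Proof.
have rpos (n : nat) : 0 < n.+1%:R^-1 :> R by rewrite invr_gt0.
pose L n := sval (cid (finite_net (rpos n))).
have LP n y : exists2 s, s \in L n & ball s n.+1%:R^-1 y := svalP (cid (finite_net (rpos n))) y.
pose Bs k := match unpickle k with
  | Some (n, i) => match nth None (map Some (L n)) i with
      | Some c => ball c n.+1%:R^-1 | None => set0 end
  | None => set0 end.
exists Bs; split.
  move=> k; rewrite /Bs; case: (unpickle k) => [[n i]|]; last exact: open0.
  by case: nth => [c|]; [exact: ball_open'|exact: open0].
move=> x N /ex_ball [e e0 sub].
have e20 : 0 < e / 2 by rewrite divr_gt0.
have [M _ hM] := near_infty_natSinv_lt (PosNum e20).
have hr : M.+1%:R^-1 < e / 2 := hM M (leqnn M).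
have [c cL bc] := LP M x.
exists (pickle (M, index c (L M))); rewrite /Bs pickleK.
rewrite (nth_map c) ?index_mem // nth_index //; split.
  exact: bc.
move=> y cy; apply: sub.
have : ball x (M.+1%:R^-1 + M.+1%:R^-1) y by exact: ball_triangle (ball_sym bc) cy.
apply: le_ball; rewrite [e](splitr e); apply: lerD; exact: ltW.
Qed.

End Basis.

Lemma openX' {U V : topologicalType} (A : set U) (B : set V) :
  open A -> open B -> open (A `*` B).
Proof.
move=> oA oB; rewrite openE => p [Ap Bp]; rewrite /interior.
exists (A, B) => //; split; exact: open_nbhs_nbhs.
Qed.

Lemma nbhsX_box {U V : topologicalType} (p : U * V) (N : set (U * V)) :
  nbhs p N -> exists A B, [/\ nbhs p.1 A, nbhs p.2 B & A `*` B `<=` N].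
Proof. by move=> [[A B] /= [nA nB] sub]; exists A, B; split. Qed.

Lemma closureX' {U V : topologicalType} (A : set U) (B : set V) :
  closure (A `*` B) `<=` closure A `*` closure B.
Proof.
move=> p clp; split.
  move=> N nN; have : nbhs p (N `*` setT) by exists (N, setT) => //; split => //; apply: filterT.
  by move=> /clp [q [[Aq _] [Nq _]]]; exists q.1.
move=> N nN; have : nbhs p (setT `*` N) by exists (setT, N) => //; split => //; apply: filterT.
by move=> /clp [q [[_ Bq] [_ Nq]]]; exists q.2.
Qed.

Lemma img_closure {U V : topologicalType} (f : U -> V) (A : set U) :
  continuous f -> f @` closure A `<=` closure (f @` A).
Proof.
move=> cf _ [q clq <-] N nN.
have : nbhs q (f @^-1` N) by exact: cf.
by move=> /clq [z [Az Nz]]; exists (f z); split => //; exists z.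
Qed.

Section MetricProd.
Local Open Scope ring_scope.
Context {R : realType} {X : metricType R}.

Lemma hausX : hausdorff_space (X * X)%type.
Proof.
have hX : hausdorff_space X := @metric_hausdorff _ X.
move=> [p1 p2] [q1 q2] clpq.
have e1 : p1 = q1.
  apply: hX => A B nA nB.
  have nA' : nbhs (p1, p2) (A `*` setT) by exists (A, setT) => //; split => //; apply: filterT.
  have nB' : nbhs (q1, q2) (B `*` setT) by exists (B, setT) => //; split => //; apply: filterT.
  by have [z [[? _] [? _]]] := clpq _ _ nA' nB'; exists z.1.
have e2 : p2 = q2.
  apply: hX => A B nA nB.
  have nA' : nbhs (p1, p2) (setT `*` A) by exists (setT, A) => //; split => //; apply: filterT.
  have nB' : nbhs (q1, q2) (setT `*` B) by exists (setT, B) => //; split => //; apply: filterT.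
  by have [z [[_ ?] [_ ?]]] := clpq _ _ nA' nB'; exists z.2.
by rewrite e1 e2.
Qed.

Lemma open_ndiag : open [set p : X * X | p.1 <> p.2].
Proof.
rewrite openE => p /= np; rewrite /interior.
have d0 : 0 < mdist p.1 p.2 by rewrite mdist_gt0; apply/eqP.
have e0 : 0 < mdist p.1 p.2 / 2 by rewrite divr_gt0.
exists (ball p.1 (mdist p.1 p.2 / 2), ball p.2 (mdist p.1 p.2 / 2)).
  by split; exact: nbhs_ball_pos.
move=> [a b] [/= pa pb] eab; subst b.
have : (ball p.1 (mdist p.1 p.2 / 2) `&` ball p.2 (mdist p.1 p.2 / 2)) a by [].
by rewrite ball_disj // mulr2n -splitr.
Qed.

End MetricProd.

Section Act.
Context {T : topologicalType} (mul : T -> T -> T) (inv : T -> T) (e : T).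
Hypothesis HG : topological_group mul inv e.
Context {X : topologicalType} (act : T -> X -> X).
Hypothesis ha : is_action mul e act.

Lemma act_cont t : continuous (act t).
Proof.
case: ha => _ _ hc x.
have h1 : (fun y => (t, y)) @ x --> (t, x).
  by apply: cvg_pair; [exact: cvg_cst|exact: cvg_id].
exact: (continuous_comp h1 (hc (t, x))).
Qed.

Lemma act_invK t x : act (inv t) (act t x) = x.
Proof. by case: ha HG => h1 h2 _ [_ _ hi _ _]; rewrite -h2 (hi t).1 h1. Qed.

Lemma act_Kinv t x : act t (act (inv t) x) = x.
Proof. by case: ha HG => h1 h2 _ [_ _ hi _ _]; rewrite -h2 (hi t).2 h1. Qed.

Lemma act2_cont t : continuous (act2 act t).
Proof.
move=> p; rewrite /act2.
have c1 : (fun q : X * X => act t q.1) @ p --> act t p.1.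
  have h : fst @ p --> p.1 by exact: cvg_fst.
  by have := continuous_comp h (@act_cont t p.1); exact.
have c2 : (fun q : X * X => act t q.2) @ p --> act t p.2.
  have h : snd @ p --> p.2 by exact: cvg_snd.
  by have := continuous_comp h (@act_cont t p.2); exact.
by apply: cvg_pair.
Qed.

Lemma act2_joint : continuous (fun q : T * (X * X) => act2 act q.1 q.2).
Proof.
case: ha => _ _ hc q; rewrite /act2; apply: cvg_pair.
  have h1 : (fun r : T * (X * X) => (r.1, r.2.1)) @ q --> (q.1, q.2.1).
    apply: cvg_pair; first exact: cvg_fst.
    apply: (@continuous_comp _ _ _ snd fst q); [exact: cvg_snd|exact: cvg_fst].
  exact: (continuous_comp h1 (hc (q.1, q.2.1))).
have h1 : (fun r : T * (X * X) => (r.1, r.2.2)) @ q --> (q.1, q.2.2).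
  apply: cvg_pair; first exact: cvg_fst.
  apply: (@continuous_comp _ _ _ snd snd q); exact: cvg_snd.
exact: (continuous_comp h1 (hc (q.1, q.2.2))).
Qed.

Lemma act2_mul s t p : act2 act (mul s t) p = act2 act s (act2 act t p).
Proof. by case: ha => _ h2 _; rewrite /act2 !h2. Qed.

Lemma act2_invK t p : act2 act (inv t) (act2 act t p) = p.
Proof. by rewrite /act2 /= !act_invK; case: p. Qed.

Lemma act2_Kinv t p : act2 act t (act2 act (inv t) p) = p.
Proof. by rewrite /act2 /= !act_Kinv; case: p. Qed.

End Act.

Section Semi.
Context {R : realType} {T : topologicalType} {X Y : metricType R}.
Variables (mul : T -> T -> T) (inv : T -> T) (e : T)
  (actX : T -> X -> X) (actY : T -> Y -> Y) (pi : X -> Y).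
Hypotheses (HG : topological_group mul inv e)
  (cX : compact [set: X]) (cY : compact [set: Y])
  (aX : is_action mul e actX) (aY : is_action mul e actY)
  (cpi : continuous pi)
  (eqv : forall t x, pi (actX t x) = actY t (pi x))
  (minY : minimal_flow actY)
  (dap : dense_ap mul actX (Rpi pi)).

Definition rho (p : X * X) : Y := pi p.1.

Lemma rho_cont : continuous rho.
Proof.
move=> p; have h : fst @ p --> p.1 by exact: cvg_fst.
by have := continuous_comp h (@cpi p.1); exact.
Qed.

Lemma hY : hausdorff_space Y. Proof. exact: (@metric_hausdorff _ Y). Qed.

Lemma closed_fiber y : closed (rho @^-1` [set y]).
Proof.
apply: preimage_closed; first by move=> p _; exact: rho_cont.
exact/accessible_closed_set1/hausdorff_accessible/hY.
Qed.

Lemma Rpi_closed : closed (Rpi pi).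
Proof.
have -> : Rpi pi = ~` ((fun p : X * X => (pi p.1, pi p.2)) @^-1`
                     [set q : Y * Y | q.1 <> q.2]).
  by apply/seteqP; split => p /=; [move=> -> |move=> /contrapT].
apply: open_closedC; apply: open_comp; last exact: open_ndiag.
move=> p _; apply: cvg_pair.
  have h : fst @ p --> p.1 by exact: cvg_fst.
  by have := continuous_comp h (@cpi p.1); exact.
have h : snd @ p --> p.2 by exact: cvg_snd.
by have := continuous_comp h (@cpi p.2); exact.
Qed.

Lemma Rpi_inv t p : Rpi pi p -> Rpi pi (act2 actX t p).
Proof. by rewrite /Rpi /act2 /= !eqv => ->. Qed.

Lemma cXX : compact [set: X * X].
Proof. by rewrite -setXTT; exact: compact_setX. Qed.

Lemma rho_act2 t p : rho (act2 actX t p) = actY t (rho p).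
Proof. by rewrite /rho /act2 /= eqv. Qed.

Lemma compact_img_closed (f : X * X -> Y) (A : set (X * X)) :
  continuous f -> closed A -> closed (f @` A).
Proof.
move=> cf cA; apply: (compact_closed hY).
apply: continuous_compact; first exact: continuous_subspaceT.
exact: subclosed_compact cA cXX _.
Qed.

Lemma semi_open P : open P -> P `&` Rpi pi !=set0 ->
  exists V, [/\ open V, V !=set0 & V `<=` rho @` (P `&` Rpi pi)].
Proof.
move=> oP PR.
have [p [Pp [RRp hsyn]]] := dap oP PR.
have nP : nbhs p P by exact: open_nbhs_nbhs.
have [A1 [A2 [nA1 nA2 sA]]] := nbhsX_box nP.
have [r1 r10 s1] := ex_ball nA1.
have [r2 r20 s2] := ex_ball nA2.
pose W := ball p.1 (r1 / 2) `*` ball p.2 (r2 / 2).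
have nW : nbhs p W.
  by exists (ball p.1 (r1 / 2), ball p.2 (r2 / 2)) => //; split;
    apply: nbhs_ball_pos; rewrite divr_gt0.
have clWP : closure W `<=` P.
  move=> q /closureX' [/(closure_half r10) h1 /(closure_half r20) h2].
  by apply: sA; split; [exact: s1|exact: s2].
have [K [cK hK]] := hsyn W nW.
pose C := closure W `&` Rpi pi.
have clC : closed C by apply: closedI; [exact: closed_closure|exact: Rpi_closed].
have cC : compact C by exact: subclosed_compact clC cXX _.
pose g := fun q : T * (X * X) => act2 actX q.1 q.2.
pose I := g @` (K `*` C).
have cI : compact I.
  apply: continuous_compact; last exact: compact_setX.
  by apply: continuous_subspaceT; exact: (act2_joint aX).
have clI : closed I by exact: compact_closed hausX cI.
pose Z := orbit_closure2 actX p.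
have ZI : Z `<=` I.
  rewrite (closure_id I).1 //; apply: closureS => _ [t _ <-].
  have [k [a [Kk [Aa ->]]]] := hK t.
  exists (k, act2 actX a p) => //; last by rewrite /g /= (act2_mul aX).
  split => //; case: Aa => Wa Ra; split => //; exact: subset_closure.
have ZR : Z `<=` Rpi pi.
  rewrite (closure_id (Rpi pi)).1; last exact: Rpi_closed.
  by apply: closureS => _ [t _ <-]; exact: Rpi_inv.
have clZ : closed Z by exact: closed_closure.
have pZ : Z p.
  apply: subset_closure; exists e => //.
  by case: aX => h1 _ _; rewrite /act2 !h1 -surjective_pairing.
have actZ t : act2 actX t @` Z `<=` Z.
  move=> q /(img_closure (@act2_cont _ _ _ _ _ aX t)); apply: closureS.
  by move=> _ [_ [s _ <-] <-]; exists (mul t s) => //; rewrite (act2_mul aX).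
have rhoZ : rho @` Z = setT.
  apply: minY.
  - by exists (rho p); exists p.
  - exact: compact_img_closed rho_cont clZ.
  - move=> t _ [z Zz <-]; exists (act2 actX t z); last by rewrite rho_act2.
    by apply: actZ; exists z.
pose PP := [set U : set (X * X) | open U /\ rho @` (Z `\` U) = setT].
have [Am [[oAm sAm] maxAm]] : exists A, PP A /\ forall B, A `<` B -> ~ PP B.
  apply: Zorn_bigcup => Fm FP tot; split.
    by apply: bigcup_open => U /FP [].
  apply/seteqP; split => // y _.
  have [[U0 FU0]|nF] := pselect (Fm !=set0); last first.
    have -> : \bigcup_(X0 in Fm) X0 = set0.
      by apply/seteqP; split => // q [U FU _]; apply: nF; exists U.
    by rewrite setD0 rhoZ.
  pose f U := Z `&` ~` U `&` rho @^-1` [set y].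
  have fF : Filter (filter_from Fm f).
    apply: filter_from_filter; first by exists U0.
    move=> U1 U2 FU1 FU2; have [h|h] := tot _ _ FU1 FU2.
      exists U2 => // q [[Zq nq] rq]; split; split => //; split => //.
      by move=> /h.
    exists U1 => // q [[Zq nq] rq]; split; split => //; split => //.
    by move=> /h.
  have pF : ProperFilter (filter_from Fm f).
    apply: filter_from_proper => U /FP [_ rU].
    have : (rho @` (Z `\` U)) y by rewrite rU.
    by move=> [z [Zz nz] rz]; exists z.
  have GZ : filter_from Fm f Z by exists U0 => // q [[]].
  have cZ : compact Z by apply: subclosed_compact clZ cXX _.
  have [x [Zx clx]] := cZ _ pF GZ.
  have hx U : Fm U -> ~ U x /\ rho x = y.
    move=> FU; have [oU _] := FP _ FU.
    have clf : closure (f U) x.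
      move=> B nB; apply: clx nB; exists U => //.
    have clS : closed (~` U `&` rho @^-1` [set y]).
      by apply: closedI; [exact: open_closedC|exact: closed_fiber].
    have : closure (~` U `&` rho @^-1` [set y]) x.
      by apply: closureS clf => q [[_ nq] rq].
    by rewrite -(closure_id _).1 // => -[].
  exists x; last by have [] := hx _ FU0.
  by split => // -[U FU Ux]; have [] := hx _ FU.
have [m [Zm nAm] _] : (rho @` (Z `\` Am)) (rho p) by rewrite sAm.
have [[k c] [Kk Cc] gkc] := ZI m Zm.
pose Q := act2 actX (inv k) @^-1` P.
have oQ : open Q.
  by apply: open_comp => // q _; exact: (@act2_cont _ _ _ _ _ aX (inv k) q).
have Qm : Q m.
  rewrite /Q /= -gkc /g /= (act2_invK HG aX); apply: clWP; by case: Cc.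
have oB : open (Am `|` Q) by exact: openU.
have nPB : ~ PP (Am `|` Q).
  apply: maxAm; split; first by move=> z Az; left.
  by move=> sub; apply: nAm; apply: sub; right.
have [y0 ny0] : exists y0, ~ (rho @` (Z `\` (Am `|` Q))) y0.
  apply: contrapT => /forallNP h; apply: nPB; split => //.
  by apply/seteqP; split => // y _; apply: contrapT; exact: h.
pose Vy := ~` (rho @` (Z `\` (Am `|` Q))).
have oVy : open Vy.
  apply: closed_openC; apply: compact_img_closed; first exact: rho_cont.
  by rewrite setDE; apply: closedI => //; exact: open_closedC.
exists (actY k @^-1` Vy); split.
- by apply: open_comp => // y _; exact: (@act_cont _ _ _ _ _ aY k y).
- by exists (actY (inv k) y0) => /=; rewrite (act_Kinv HG aY).
- move=> y' Vy'.
  have [z [Zz nAz] rz] : (rho @` (Z `\` Am)) (actY k y') by rewrite sAm.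
  have Qz : Q z.
    apply: contrapT => nQz; apply: Vy'; exists z => //; split => //.
    by case.
  exists (act2 actX (inv k) z); first by split => //; exact: Rpi_inv (ZR _ Zz).
  by rewrite rho_act2 rz (act_invK HG aY).
Qed.

End Semi.

Section GTrick.
Context {R : realType} {T : topologicalType} {X Y : metricType R}.
Variables (mul : T -> T -> T) (inv : T -> T) (e : T)
  (actX : T -> X -> X) (actY : T -> Y -> Y) (pi : X -> Y).
Hypotheses (HG : topological_group mul inv e)
  (cX : compact [set: X])
  (aX : is_action mul e actX) (aY : is_action mul e actY)
  (cpi : continuous pi)
  (eqv : forall t x, pi (actX t x) = actY t (pi x))
  (minY : minimal_flow actY)
  (dap : dense_ap mul actX (Rpi pi)).

Let so := semi_open HG cX aX aY cpi eqv minY dap.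
Let RR := Rpi pi.

Lemma semi_dense P y N : open P -> (rho pi @` (P `&` RR)) y -> nbhs y N ->
  exists V, [/\ open V, V !=set0 & V `<=` N `&` rho pi @` (P `&` RR)].
Proof.
move=> oP [q [Pq Rq] <-]; rewrite nbhsE => -[N0 [oN0 N0q] sN0].
have oP' : open (P `&` rho pi @^-1` N0).
  apply: openI => //; apply: open_comp => // z _; exact: (rho_cont cpi).
have [|V [oV V0 sV]] := so oP'; first by exists q.
exists V; split => // v /sV [z [[Pz N0z] Rz] <-]; split; first exact: sN0.
by exists z.
Qed.

Definition Gset (O P : set (X * X)) : set Y :=
  ~` closure (rho pi @` (O `&` RR)) `|` interior (rho pi @` (P `&` RR)).

Lemma Gset_open O P : open (Gset O P).
Proof.
apply: openU; last exact: open_interior.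
exact/closed_openC/closed_closure.
Qed.

Lemma Gset_dense O P : open P -> O `&` RR `<=` closure (P `&` RR) -> dense (Gset O P).
Proof.
move=> oP sub N [y Ny] oN.
have [[y1 [Ny1 ny1]]|h] := pselect (exists y1, N y1 /\ ~ closure (rho pi @` (O `&` RR)) y1).
  by exists y1; split => //; left.
have cly : closure (rho pi @` (O `&` RR)) y.
  by apply: contrapT => ncl; apply: h; exists y.
have [_ [[q Oq <-] Nq]] := cly N (open_nbhs_nbhs (conj oN Ny)).
have nq : nbhs q (rho pi @^-1` N).
  apply: open_nbhs_nbhs; split => //; apply: open_comp => // z _.
  exact: (rho_cont cpi).
have [q' [[Pq' Rq'] Nq']] := sub _ Oq _ nq.
have [V [oV [v Vv] sV]] := semi_dense oP (ex_intro2 _ _ q' (conj Pq' Rq') erefl)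
  (open_nbhs_nbhs (conj oN Nq')).
exists v; split; first by have [] := sV _ Vv.
right; rewrite /interior; apply: (@filterS _ _ _ V).
  by move=> w /sV [].
exact: open_nbhs_nbhs.
Qed.

Lemma Gset_prop O P y : Gset O P y -> (rho pi @` (O `&` RR)) y ->
  (rho pi @` (P `&` RR)) y.
Proof.
case=> [ncl h|]; first by exfalso; apply: ncl; exact: subset_closure.
by move=> /interior_subset.
Qed.

End GTrick.

End Helpers.
Import Helpers.

Theorem theorem5p5 (R : realType) (T : topologicalType)
    (mul : T -> T -> T) (inv : T -> T) (e : T)
    (X Y : metricType R) (actX : T -> X -> X) (actY : T -> Y -> Y)
    (pi : X -> Y) :
  topological_group mul inv e ->
  compact [set: X] -> compact [set: Y] ->
  is_action mul e actX -> is_action mul e actY ->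
  continuous pi -> (forall y, exists x, pi x = y) ->
  (forall t x, pi (actX t x) = actY t (pi x)) ->
  Rpi pi <> @diagX X ->
  minimal_flow actY ->
  dense_ap mul actX (Rpi pi) ->
  weakly_mixing actX pi ->
  exists YLY : set Y, residual YLY /\
    forall y, YLY y ->
      (forall x, ~ isolated [set x | pi x = y] x) /\
      exists B : set X,
        [/\ B `<=` [set x | pi x = y],
            ~ countable B,
            [set x | pi x = y] `<=` closure B &
            LY_scrambled actX pi (Rpi pi) B].
Proof.
move=> HG cX cY aX aY cpi surj eqv ntriv minY dap wm.
have [Bs [oBs bBs]] := ex_basis cX.
pose RR := Rpi pi.
have [q0 [Rq0 nq0]] : exists q, RR q /\ q.1 <> q.2.
  apply: contrapT => /forallNP h; apply: ntriv; apply/seteqP; split.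
    by move=> q Rq; apply: contrapT => nq; apply: (h q).
  by move=> [a b]; rewrite /diagX /Rpi /= => ->.
pose box i j := Bs i `*` Bs j.
have obox i j : open (box i j) by apply: openX'.
pose Wij i j := [set p : X * X | (box i j `&` RR !=set0) ->
  exists t, box i j (act2 actX t p)].
have oWij i j : open (Wij i j).
  have [h|h] := pselect (box i j `&` RR !=set0).
    have -> : Wij i j = \bigcup_t (act2 actX t @^-1` box i j).
      apply/seteqP; split => p /=; first by move=> /(_ h) [t bt]; exists t.
      by move=> [t _ bt] _; exists t.
    apply: bigcup_open => t _; apply: open_comp => // p _.
    exact: (@act2_cont _ _ _ _ _ aX t p).
  have -> : Wij i j = setT by apply/seteqP; split => // p _ /h.
  exact: openT.
have dWij i j q N : RR q -> nbhs q N -> exists q', [/\ N q', RR q' & Wij i j q'].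
  move=> Rq; rewrite nbhsE => -[N0 [oN0 N0q] sN0].
  have [h|h] := pselect (box i j `&` RR !=set0); last first.
    by exists q; split; [exact: sN0|exact: Rq|move=> /h].
  have n1 : N0 `&` RR !=set0 by exists q.
  have [t [z [[bz Rz] [q' [N0q' Rq'] zq']]]] := wm _ _ oN0 (obox i j) n1 h.
  exists q'; split => //; first exact: sN0.
  by move=> _; exists t; rewrite zq'.
pose Wk k := if unpickle k is Some (i, j) then Wij i j else setT.
have oWk k : open (Wk k) by rewrite /Wk; case: unpickle => [[i j]|] //; exact: openT.
have dWk k q N : RR q -> nbhs q N -> exists q', [/\ N q', RR q' & Wk k q'].
  rewrite /Wk; case: unpickle => [[i j]|]; first exact: dWij.
  by move=> Rq nN; exists q; split => //; exact: nbhs_singleton.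
pose nd := [set p : X * X | p.1 <> p.2].
pose G1 i j k := Gset pi (box i j) (box i j `&` Wk k).
pose G2 i := Gset pi (box i i) (box i i `&` nd).
have oG1 i j k : open (G1 i j k) by exact: Gset_open.
have oG2 i : open (G2 i) by exact: Gset_open.
have dG1 i j k : dense (G1 i j k).
  apply: (Gset_dense HG cX aX aY cpi eqv minY dap).
    by apply: openI => //; exact: obox.
  move=> q [bq Rq] N nN.
  have nN' : nbhs q (N `&` box i j).
    by apply: filterI => //; apply: open_nbhs_nbhs; split => //.
  have [q' [[Nq' bq'] Rq' Wq']] := dWk k q _ Rq nN'.
  by exists q'; split => //; split.
have dG2 i : dense (G2 i).
  apply: (Gset_dense HG cX aX aY cpi eqv minY dap).
    by apply: openI; [exact: obox|exact: open_ndiag].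
  move=> q [bq Rq] N; rewrite nbhsE => -[N0 [oN0 N0q] sN0].
  have oN1 : open (N0 `&` box i i) by apply: openI.
  have n1 : (N0 `&` box i i) `&` RR !=set0 by exists q.
  have [t [z [[ndz Rz] [q' [[N0q' bq'] Rq'] zq']]]] :=
    wm _ _ oN1 (@open_ndiag _ X) n1 (ex_intro _ q0 (conj nq0 Rq0)).
  exists q'; split; last exact: sN0.
  split; [split => //|exact: Rq'].
  by move=> e12; apply: ndz; rewrite -zq' /act2 /= e12.
pose Fam n := match unpickle n : option ((nat * nat * nat) + nat) with
  | Some (inl (i, j, k)) => G1 i j k | Some (inr i) => G2 i | None => setT end.
have oFam n : open (Fam n) /\ dense (Fam n).
  rewrite /Fam; case: unpickle => [[[[i j] k]|i]|]; split => //.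
  - exact: openT.
  - by move=> U0 [z Uz] _; exists z.
exists (\bigcap_n Fam n); split; first by exists Fam; split.
move=> y Yy.
have inG1 i j k : G1 i j k y.
  by have := Yy (pickle (inl (i, j, k) : (nat * nat * nat) + nat) ) I; rewrite /Fam pickleK.
have inG2 i : G2 i y.
  by have := Yy (pickle (inr i : (nat * nat * nat) + nat)) I; rewrite /Fam pickleK.
pose Fy := [set x | pi x = y].
have perf x : Fy x -> forall N, nbhs x N -> exists2 x', Fy x' & N x' /\ x' <> x.
  move=> Fx N nN; have [i [Bix sub]] := bBs _ _ nN.
  have hO : (rho pi @` (box i i `&` RR)) y by exists (x, x).
  have [[a b] [[[Ba Bb] nab] Rab] rab] := Gset_prop (inG2 i) hO.
  rewrite /rho /= in rab.
  have [ax|ax] := pselect (a = x).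
    exists b; first by rewrite /Fy /= -Rab.
    by split; [exact: sub|move=> bx; apply: nab; rewrite ax bx].
  by exists a; [exact: rab|split => //; exact: sub].
split.
  move=> x [/set_mem Fx [V nV VF]].
  have [x' Fx' [Vx' nx']] := perf x Fx V nV.
  have : (V `&` Fy) x' by [].
  by rewrite VF.
have clFy : closed Fy.
  have -> : Fy = pi @^-1` [set y] by [].
  apply: preimage_closed; first by move=> z _; exact: cpi.
  exact/accessible_closed_set1/hausdorff_accessible/(@metric_hausdorff _ Y).
have cFy : compact Fy by exact: (subclosed_compact clFy cX).
have F0 : Fy !=set0 by have [x px] := surj y; exists x.
have bW k : boxd Fy (Wk k).
  move=> U V oU oV [u [Uu Fu]] [v [Vv Fv]].
  have [i [Biu subi]] := bBs u U (open_nbhs_nbhs (conj oU Uu)).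
  have [j [Bjv subj]] := bBs v V (open_nbhs_nbhs (conj oV Vv)).
  have hO : (rho pi @` (box i j `&` RR)) y.
    by exists (u, v) => //; split => //; rewrite /RR /Rpi /= Fu Fv.
  have [[a b] [[[Ba Bb] Wab] Rab] rab] := Gset_prop (inG1 i j k) hO.
  rewrite /rho /= in rab.
  exists a, b; split => //; [exact: subi|exact: subj|].
  by rewrite /Fy /= -Rab.
have [B [BF nB clB hB]] := mycielski cFy F0 perf oWk bW oBs bBs.
exists B; split => // x x' Bx Bx' nxx'; split.
  by rewrite /Rpi /= (BF _ Bx) (BF _ Bx').
move=> r Rr N nN.
have [A1 [A2 [nA1 nA2 sA]]] := nbhsX_box nN.
have [i [Bir subi]] := bBs _ _ nA1.
have [j [Bjr subj]] := bBs _ _ nA2.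
have := hB _ _ Bx Bx' nxx' (pickle (i, j)); rewrite /Wk pickleK => hW.
have [|t bt] := hW; first by exists r.
exists (act2 actX t (x, x')); split; first by exists t.
by apply: sA; case: bt => b1 b2; split; [exact: subi|exact: subj].
Qed.
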